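(* For any time warp $f$ and $n\in\omega\setminus\{0\}$: $f^{o}(n)=0\iff f(n)<\omega$; $f^{o}(n)=\omega\iff f(n)=\omega$; $f^{o}(\omega)=0\iff f(k)<\omega$ for all $k\in\omega$; $f^{o}(\omega)=\omega\iff f(k)=\omega$ for some $k\in\omega$.
   Context: Let $\overline{\omega}=\omega\cup\{\omega\}$ be the natural numbers with a top element $\omega$ adjoined, with its natural total order. A time warp is a monotone map $f\colon\overline{\omega}\to\overline{\omega}$ with $f(0)=0$ and $f(\omega)=\bigvee\{f(n)\mid n\in\omega\}$. The set $W$ of time warps is ordered pointwise and $fg:=f\circ g$; $\top$ maps every $p\ne0$ to $\omega$ and $0$ to $0$. The left residual $\backslash$ is the binary operation on $W$ with $g\le f\backslash h\iff fg\le h$ for all $f,g,h\in W$. Define $f^{o}:=\top\backslash f$. *)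

(* Defs.v *)
From Stdlib Require Import Arith Lia.

Inductive wbar : Type := Fin (n : nat) | Omega.

Definition wle (x y : wbar) : Prop :=
  match x, y with
  | Fin m, Fin n => m <= n
  | _, Omega => True
  | Omega, Fin _ => False
  end.

Definition wlt (x y : wbar) : Prop := wle x y /\ x <> y.

Definition is_sup (s : nat -> wbar) (x : wbar) : Prop :=
  (forall n, wle (s n) x) /\ (forall y, (forall n, wle (s n) y) -> wle x y).

Definition is_timewarp (f : wbar -> wbar) : Prop :=
  (forall x y, wle x y -> wle (f x) (f y)) /\
  f (Fin 0) = Fin 0 /\
  is_sup (fun n => f (Fin n)) (f Omega).

Definition W := { f : wbar -> wbar | is_timewarp f }.

Definition app (f : W) : wbar -> wbar := proj1_sig f.
Coercion app : W >-> Funclass.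

Definition Wle (f g : W) : Prop := forall p, wle (f p) (g p).

Definition top_fun (p : wbar) : wbar :=
  match p with Fin 0 => Fin 0 | _ => Omega end.

Lemma top_timewarp : is_timewarp top_fun.
Proof.
  split; [|split].
  - intros [[|m]|] [[|n]|]; simpl; auto; lia.
  - reflexivity.
  - split.
    + intros [|n]; simpl; auto.
    + intros [y|] H; simpl; auto. specialize (H 1); simpl in H; exact H.
Qed.

Definition Wtop : W := exist _ top_fun top_timewarp.

(* left residual: a binary operation res on W with
   g <= res f h  <->  f o g <= h  (pointwise), for all f g h in W.
   Such an operation is unique (Galois adjunction). *)
Definition is_left_residual (res : W -> W -> W) : Prop :=
  forall f g h : W, Wle g (res f h) <-> (forall p, wle (f (g p)) (h p)).

(* Main.v *)
Require Import Defs.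
From Stdlib Require Import Arith Lia Classical.

Definition gfun (n : nat) (p : wbar) : wbar :=
  match p with Fin m => if n <=? m then Omega else Fin 0 | Omega => Omega end.

Lemma gfun_tw (n : nat) : n <> 0 -> is_timewarp (gfun n).
Proof.
  intro Hn. split; [|split].
  - intros [m|] [k|]; simpl; auto; try tauto.
    intro H. destruct (Nat.leb_spec n m); destruct (Nat.leb_spec n k); simpl; auto; try lia.
    intros _; destruct (n <=? m); simpl; auto.
  - simpl. destruct (Nat.leb_spec n 0); [lia|reflexivity].
  - split.
    + intros k; simpl; auto. destruct (n <=? k); simpl; auto.
    + intros [y|] H; simpl; auto. specialize (H n). simpl in H.
      rewrite Nat.leb_refl in H. exact H.
Qed.

Lemma wle_Omega_inv x : wle Omega x -> x = Omega.
Proof. destruct x; simpl; tauto. Qed.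

Lemma wle_0_inv x : wle x (Fin 0) -> x = Fin 0.
Proof. destruct x as [m|]; simpl; intros H; [f_equal; lia | tauto]. Qed.

Theorem lemma2p5 (res : W -> W -> W) (Hres : is_left_residual res) (f : W) :
  let fo := res Wtop f in
  (forall n : nat, n <> 0 ->
     (fo (Fin n) = Fin 0 <-> wlt (f (Fin n)) Omega) /\
     (fo (Fin n) = Omega <-> f (Fin n) = Omega)) /\
  (fo Omega = Fin 0 <-> (forall k : nat, wlt (f (Fin k)) Omega)) /\
  (fo Omega = Omega <-> (exists k : nat, f (Fin k) = Omega)).
Proof.
  intro fo.
  assert (Hrefl : forall x, wle x x) by (intros [m|]; simpl; auto).
  assert (Hup : forall p, fo p <> Fin 0 -> f p = Omega).
  { intros p Hp. assert (H := proj1 (Hres Wtop fo f) (fun q => Hrefl (fo q)) p).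
    unfold Wtop, app in H; simpl in H. fold (app fo) in H. fold (app f) in H.
    destruct (fo p) as [[|k]|]; [congruence| |]; simpl in H; apply wle_Omega_inv; exact H. }
  destruct (proj2_sig f) as [Fmon [F0 [Fub Flub]]].
  change (proj1_sig f) with (app f) in *.
  assert (Hlow : forall n, n <> 0 -> f (Fin n) = Omega -> fo (Fin n) = Omega /\ fo Omega = Omega).
  { intros n Hn Hf.
    set (G := exist _ (gfun n) (gfun_tw n Hn) : W).
    assert (HG : Wle G fo).
    { apply (proj2 (Hres Wtop G f)). intros [m|]; unfold Wtop, G, app; cbn [proj1_sig gfun];
      change (proj1_sig f) with (app f) in *.
      - destruct (Nat.leb_spec n m); cbn [top_fun].
        + rewrite <- Hf. apply Fmon. simpl; exact H.
        + destruct (f (Fin m)); simpl; auto; lia.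
      - cbn [top_fun]. specialize (Fub n). rewrite Hf in Fub. exact Fub. }
    split.
    - apply wle_Omega_inv. specialize (HG (Fin n)). change (gfun n (Fin n)) with (G (Fin n)) in *; unfold G, app in HG; cbn [proj1_sig gfun] in HG.
      rewrite Nat.leb_refl in HG. exact HG.
    - apply wle_Omega_inv. exact (HG Omega). }
  assert (Hf0 : forall k, f (Fin k) = Omega -> k <> 0).
  { intros k Hk ->. rewrite F0 in Hk. discriminate. }
  destruct (proj2_sig fo) as [_ [_ [_ Golub]]].
  assert (Hall : (forall k, f (Fin k) <> Omega) -> fo Omega = Fin 0).
  { intro Hk. apply wle_0_inv. apply Golub. intro m. simpl. fold (app fo).
    destruct (fo (Fin m)) as [[|j]|] eqn:E; simpl; auto.
    - exfalso; apply (Hk m), Hup; rewrite E; discriminate.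
    - exfalso; apply (Hk m), Hup; rewrite E; discriminate. }
  assert (wltO : forall x, wlt x Omega <-> x <> Omega).
  { intros x; unfold wlt; split; [tauto|]. intro; split; auto. destruct x; simpl; auto. }
  split; [|split].
  - intros n Hn. split; split.
    + intros E. apply wltO. intro Hf. destruct (Hlow n Hn Hf). congruence.
    + intros Hw. apply wltO in Hw. destruct (fo (Fin n)) as [[|j]|] eqn:E; auto;
        exfalso; apply Hw, Hup; rewrite E; discriminate.
    + intros E. apply Hup. rewrite E; discriminate.
    + intros Hf. exact (proj1 (Hlow n Hn Hf)).
  - split.
    + intros E k. apply wltO. intro Hf. destruct (Hlow k (Hf0 k Hf) Hf). congruence.
    + intros H. apply Hall. intro k. apply wltO, H.
  - split.
    + intros E. apply NNPP. intro Hn. rewrite Hall in E; [discriminate|].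
      intros k Hk; apply Hn; exists k; exact Hk.
    + intros [k Hk]. exact (proj2 (Hlow k (Hf0 k Hk) Hk)).
Qed.
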